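(* Let $(G,\tau)$ be a non-discrete metrizable topological group. Then the coarse structure of $(G,\mathcal{S}_\tau)$ does not have a linearly ordered (by inclusion) base. In particular, $(G,\mathcal{S}_\tau)$ is not metrizable.
   Context: $\mathcal{S}_\tau$ is the smallest group ideal on $G$ containing every set $\{x\}\cup\{x_n:n\in\omega\}$ with $x_n\to x$ in $(G,\tau)$. A group ideal on $G$ is a family of subsets containing all finite subsets, closed under subsets and under $(A,B)\mapsto AB^{-1}$; it defines the coarse structure on $G$ with base $\{\{(x,y):x\in Ay\}:A\in\mathcal{I}\}$. A base of a coarse structure $\mathcal{E}$ is a subfamily $\mathcal{E}'$ such that every $E\in\mathcal{E}$ is contained in some member of $\mathcal{E}'$. A coarse space is metrizable iff its coarse structure has a countable base. *)

(* Defs.v *)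
From Stdlib Require Import Reals List.
Open Scope R_scope.

Section Defs.
Context {G : Type} (mul : G -> G -> G) (inv : G -> G) (e : G).

Definition is_group : Prop :=
  (forall x y z, mul x (mul y z) = mul (mul x y) z) /\
  (forall x, mul e x = x) /\ (forall x, mul x e = x) /\
  (forall x, mul (inv x) x = e) /\ (forall x, mul x (inv x) = e).

Definition is_topology (tau : (G -> Prop) -> Prop) : Prop :=
  tau (fun _ => True) /\ tau (fun _ => False) /\
  (forall U V, tau U -> tau V -> tau (fun x => U x /\ V x)) /\
  (forall (F : (G -> Prop) -> Prop), (forall U, F U -> tau U) ->
     tau (fun x => exists U, F U /\ U x)).

Definition is_topological_group (tau : (G -> Prop) -> Prop) : Prop :=
  is_group /\ is_topology tau /\
  (forall x y W, tau W -> W (mul x y) ->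
     exists U V, tau U /\ tau V /\ U x /\ V y /\
       (forall u v, U u -> V v -> W (mul u v))) /\
  (forall x W, tau W -> W (inv x) ->
     exists U, tau U /\ U x /\ (forall u, U u -> W (inv u))).

Definition is_metric (d : G -> G -> R) : Prop :=
  (forall x y, 0 <= d x y) /\ (forall x y, d x y = 0 <-> x = y) /\
  (forall x y, d x y = d y x) /\ (forall x y z, d x z <= d x y + d y z).

Definition metrizable_topology (tau : (G -> Prop) -> Prop) : Prop :=
  exists d, is_metric d /\
    forall U, tau U <-> (forall x, U x -> exists eps, 0 < eps /\
                            forall y, d x y < eps -> U y).

Definition discrete_topology (tau : (G -> Prop) -> Prop) : Prop :=
  forall U, tau U.

Definition converges (tau : (G -> Prop) -> Prop) (xs : nat -> G) (x : G) : Prop :=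
  forall U, tau U -> U x -> exists N, forall n, (N <= n)%nat -> U (xs n).

Definition finite_subset (A : G -> Prop) : Prop :=
  exists l : list G, forall x, A x -> In x l.

Definition prod_inv (A B : G -> Prop) : G -> Prop :=
  fun z => exists a b, A a /\ B b /\ z = mul a (inv b).

Definition group_ideal (I : (G -> Prop) -> Prop) : Prop :=
  (forall A, finite_subset A -> I A) /\
  (forall A B, I A -> (forall x, B x -> A x) -> I B) /\
  (forall A B, I A -> I B -> I (prod_inv A B)).

Definition seq_with_limit (xs : nat -> G) (x : G) : G -> Prop :=
  fun z => z = x \/ exists n, z = xs n.

Definition S_tau (tau : (G -> Prop) -> Prop) : (G -> Prop) -> Prop :=
  fun A => forall I, group_ideal I ->
    (forall xs x, converges tau xs x -> I (seq_with_limit xs x)) -> I A.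

Definition entourage_of (A : G -> Prop) : G -> G -> Prop :=
  fun x y => exists a, A a /\ x = mul a y.

Definition coarse_structure (I : (G -> Prop) -> Prop) : (G -> G -> Prop) -> Prop :=
  fun E => exists A, I A /\ forall x y, E x y -> entourage_of A x y.

Definition rel_sub (E F : G -> G -> Prop) : Prop := forall x y, E x y -> F x y.

Definition is_base (C B : (G -> G -> Prop) -> Prop) : Prop :=
  (forall E, B E -> C E) /\ (forall E, C E -> exists E', B E' /\ rel_sub E E').

Definition has_linearly_ordered_base (C : (G -> G -> Prop) -> Prop) : Prop :=
  exists B, is_base C B /\
    forall E1 E2, B E1 -> B E2 -> rel_sub E1 E2 \/ rel_sub E2 E1.

(* A coarse space is metrizable iff its coarse structure has a countable base. *)
Definition coarse_metrizable (C : (G -> G -> Prop) -> Prop) : Prop :=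
  exists f : nat -> (G -> G -> Prop),
    is_base C (fun E => exists n, E = f n).
End Defs.

(* Main.v *)
Require Import Defs.
From Stdlib Require Import Reals List.
From Stdlib Require Import Lra Lia Classical ClassicalEpsilon.
From Stdlib Require Cantor.

Open Scope R_scope.

Section Main.
Variable G : Type.
Variables (mul : G -> G -> G) (inv : G -> G) (e : G)
  (tau : (G -> Prop) -> Prop) (d : G -> G -> R).
Hypothesis assoc : forall x y z, mul x (mul y z) = mul (mul x y) z.
Hypothesis idl : forall x, mul e x = x.
Hypothesis idr : forall x, mul x e = x.
Hypothesis invl : forall x, mul (inv x) x = e.
Hypothesis mulc : forall x y W, tau W -> W (mul x y) ->
     exists U V, tau U /\ tau V /\ U x /\ V y /\
       (forall u v, U u -> V v -> W (mul u v)).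
Hypothesis invc : forall x W, tau W -> W (inv x) ->
     exists U, tau U /\ U x /\ (forall u, U u -> W (inv u)).
Hypothesis d_pos : forall x y, 0 <= d x y.
Hypothesis d_zero : forall x y, d x y = 0 <-> x = y.
Hypothesis d_sym : forall x y, d x y = d y x.
Hypothesis d_tri : forall x y z, d x z <= d x y + d y z.
Hypothesis Htau : forall U, tau U <-> (forall x, U x -> exists eps, 0 < eps /\
                            forall y, d x y < eps -> U y).
Hypothesis ND0 : exists x, forall eps, 0 < eps -> exists y, y <> x /\ d x y < eps.

Lemma d_refl x : d x x = 0.
Proof. apply d_zero; reflexivity. Qed.

Lemma cancel_l a x y : mul a x = mul a y -> x = y.
Proof.
  intro H. rewrite <- (idl x), <- (idl y), <- (invl a), <- !assoc, H. reflexivity.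
Qed.

Lemma inv_inv x : inv (inv x) = x.
Proof.
  rewrite <- (idr (inv (inv x))), <- (invl x), assoc, invl, idl. reflexivity.
Qed.

Lemma ball_open x r : tau (fun y => d x y < r).
Proof.
  apply Htau. intros y Hy. exists (r - d x y). split. lra.
  intros z Hz. pose proof (d_tri x y z). lra.
Qed.

Lemma open_ball U x : tau U -> U x -> exists eps, 0 < eps /\ forall y, d x y < eps -> U y.
Proof. intros HU Ux. apply (proj1 (Htau U) HU x Ux). Qed.

Lemma cont_l a b eps : 0 < eps -> exists del, 0 < del /\
  forall v, d b v < del -> d (mul a b) (mul a v) < eps.
Proof.
  intro He.
  destruct (mulc a b (fun z => d (mul a b) z < eps) (ball_open _ _)
     ltac:(simpl; rewrite d_refl; exact He)) as
    [U [V [HU [HV [Ua [Vb Huv]]]]]].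
  destruct (open_ball V b HV Vb) as [del [Hd Hb]].
  exists del. split; [exact Hd|]. intros v Hv. apply (Huv a v Ua (Hb v Hv)).
Qed.

Lemma cont_div al be eps : 0 < eps -> exists del, 0 < del /\
  forall u v, d al u < del -> d be v < del -> d (mul al (inv be)) (mul u (inv v)) < eps.
Proof.
  intro He.
  destruct (mulc al (inv be) (fun z => d (mul al (inv be)) z < eps) (ball_open _ _)
     ltac:(simpl; rewrite d_refl; exact He)) as
    [U [V [HU [HV [Ua [Vb Huv]]]]]].
  destruct (invc be V HV Vb) as [U' [HU' [U'b HU'i]]].
  destruct (open_ball U al HU Ua) as [d1 [Hd1 Hb1]].
  destruct (open_ball U' be HU' U'b) as [d2 [Hd2 Hb2]].
  exists (Rmin d1 d2). split. apply Rmin_glb_lt; auto.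
  intros u v Hu Hv. apply Huv. apply Hb1. pose proof (Rmin_l d1 d2). lra.
  apply HU'i. apply Hb2. pose proof (Rmin_r d1 d2). lra.
Qed.

Lemma arch eps : 0 < eps -> exists K, / INR (S K) < eps.
Proof.
  intro He. destruct (archimed_cor1 eps He) as [N [HN HN0]].
  exists N. eapply Rle_lt_trans; [|exact HN].
  apply Rinv_le_contravar. apply lt_0_INR. exact HN0. apply le_INR. lia.
Qed.

Lemma inv_mono k K : (K <= k)%nat -> / INR (S k) <= / INR (S K).
Proof.
  intro H. apply Rinv_le_contravar. apply lt_0_INR. lia. apply le_INR. lia.
Qed.

Lemma conv_of_metric (z : nat -> G) x :
  (forall n, d x (z n) < / INR (S n)) -> converges tau z x.
Proof.
  intros Hz U HU Ux. destruct (open_ball U x HU Ux) as [eps [He Hb]].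
  destruct (arch eps He) as [K HK]. exists K. intros n Hn. apply Hb.
  pose proof (Hz n). pose proof (inv_mono n K Hn). lra.
Qed.

Definition cluster (y : nat -> G) (l : G) :=
  forall eps, 0 < eps -> forall N, exists k, (N <= k)%nat /\ d (y k) l < eps.
Definition CC (c : nat -> G) :=
  forall y : nat -> G, (forall k, exists n, c n = y k) -> exists m, cluster y (c m).
Definition Pinv (A : G -> Prop) :=
  exists c, (forall a, A a -> exists n, c n = a) /\ CC c.

Lemma pigeon (f : nat -> G) M : forall (y : nat -> G) N,
  (forall k, (N <= k)%nat -> exists i, (i < M)%nat /\ y k = f i) ->
  exists i, forall K, exists k, (K <= k)%nat /\ y k = f i.
Proof.
  induction M as [|M IH]; intros y N H.
  - destruct (H N (le_n N)) as [i [Hi _]]. lia.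
  - destruct (classic (forall K, exists k, (K <= k)%nat /\ y k = f M)) as [Hy|Hn].
    + exists M. exact Hy.
    + apply not_all_ex_not in Hn. destruct Hn as [K HK].
      apply (IH y (max N K)). intros k Hk.
      destruct (H k ltac:(lia)) as [i [Hi Hyi]].
      destruct (Nat.eq_dec i M) as [->|Hne].
      * exfalso. apply HK. exists k. split; [lia|exact Hyi].
      * exists i. split; [lia|exact Hyi].
Qed.

Lemma io_cluster y v : (forall K, exists k, (K <= k)%nat /\ y k = v) -> cluster y v.
Proof.
  intros H eps He N. destruct (H N) as [k [Hk Hy]]. exists k. split; auto.
  rewrite Hy, d_refl. exact He.
Qed.

Lemma not_cluster y l : ~ cluster y l ->
  exists eps, 0 < eps /\ exists N, forall k, (N <= k)%nat -> eps <= d (y k) l.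
Proof.
  intro H. apply NNPP. intro H2. apply H. intros eps Heps N. apply NNPP. intro H3.
  apply H2. exists eps. split; auto. exists N. intros k Hk. apply Rnot_lt_le.
  intro H4. apply H3. exists k. auto.
Qed.

Lemma P_sub A B : Pinv A -> (forall x, B x -> A x) -> Pinv B.
Proof.
  intros [c [Hc HC]] HB. exists c. split; auto.
Qed.

Lemma P_fin A : finite_subset A -> Pinv A.
Proof.
  intros [l Hl]. exists (fun n => nth n l e). split.
  - intros a Ha. destruct (In_nth l a e (Hl a Ha)) as [n [_ Hn]]. exists n. exact Hn.
  - intros y Hy. destruct (pigeon (fun n => nth n l e) (S (length l)) y 0) as [i Hi].
    + intros k _. destruct (Hy k) as [n Hn].
      destruct (Nat.lt_ge_cases n (S (length l))) as [Hlt|Hge].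
      * exists n. split; auto.
      * exists (length l). split. lia.
        rewrite <- Hn. rewrite !nth_overflow; auto. lia.
    + exists i. apply io_cluster. exact Hi.
Qed.

Lemma P_gen xs x : converges tau xs x -> Pinv (seq_with_limit xs x).
Proof.
  intro Hc. set (c := fun n => match n with 0%nat => x | S m => xs m end).
  exists c. split.
  - intros a [Ha|[n Ha]]. exists 0%nat. auto. exists (S n). auto.
  - intros y Hy. destruct (classic (exists m, cluster y (c m))) as [H|Hno]; auto.
    exfalso. assert (Hnc : ~ cluster y x) by (intro H; apply Hno; exists 0%nat; exact H).
    destruct (not_cluster y x Hnc) as [eps [He [N HN]]].
    destruct (Hc (fun z => d x z < eps) (ball_open _ _)
       ltac:(simpl; rewrite d_refl; exact He)) as [N0 HN0].
    destruct (pigeon c (S N0) y N) as [i Hi].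
    + intros k Hk. destruct (Hy k) as [n Hn]. specialize (HN k Hk).
      destruct n as [|m].
      * simpl in Hn. rewrite <- Hn, d_refl in HN. lra.
      * exists (S m). split; auto.
        destruct (Nat.lt_ge_cases m N0) as [Hlt|Hge]. lia.
        exfalso. specialize (HN0 m Hge). simpl in HN0, Hn. rewrite <- Hn, d_sym in HN. lra.
    + apply Hno. exists i. apply io_cluster. exact Hi.
Qed.

Lemma subseq y l : cluster y l -> exists phi : nat -> nat,
  forall k, (k <= phi k)%nat /\ d (y (phi k)) l < / INR (S k).
Proof.
  intro H. apply (choice (fun k n => (k <= n)%nat /\ d (y n) l < / INR (S k))).
  intro k. apply H. apply Rinv_0_lt_compat. apply lt_0_INR. lia.
Qed.

Lemma P_prod A B : Pinv A -> Pinv B -> Pinv (prod_inv mul inv A B).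
Proof.
  intros [c1 [Hc1 CC1]] [c2 [Hc2 CC2]].
  set (c := fun n => mul (c1 (fst (Cantor.of_nat n))) (inv (c2 (snd (Cantor.of_nat n))))).
  assert (Hcij : forall i j, c (Cantor.to_nat (i, j)) = mul (c1 i) (inv (c2 j))).
  { intros i j. unfold c. rewrite Cantor.cancel_of_to. reflexivity. }
  exists c. split.
  - intros z [a [b [Ha [Hb ->]]]]. destruct (Hc1 a Ha) as [i <-].
    destruct (Hc2 b Hb) as [j <-]. exists (Cantor.to_nat (i, j)). apply Hcij.
  - intros y Hy. destruct (choice (fun k n => c n = y k) Hy) as [idx Hidx].
    set (a := fun k => c1 (fst (Cantor.of_nat (idx k)))).
    set (b := fun k => c2 (snd (Cantor.of_nat (idx k)))).
    assert (Hyab : forall k, y k = mul (a k) (inv (b k))).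
    { intro k. rewrite <- Hidx. reflexivity. }
    destruct (CC1 a (fun k => ex_intro _ _ eq_refl)) as [m1 Hm1].
    destruct (subseq a _ Hm1) as [phi Hphi].
    destruct (CC2 (fun k => b (phi k)) (fun k => ex_intro _ _ eq_refl)) as [m2 Hm2].
    exists (Cantor.to_nat (m1, m2)). rewrite Hcij.
    intros eps He N.
    destruct (cont_div (c1 m1) (c2 m2) eps He) as [del [Hdel Hd]].
    destruct (arch del Hdel) as [K HK].
    destruct (Hm2 del Hdel (max N K)) as [k [Hk Hbk]].
    exists (phi k). destruct (Hphi k) as [Hpk Hak]. split. lia.
    rewrite Hyab, d_sym. apply Hd.
    + rewrite d_sym. pose proof (inv_mono k K ltac:(lia)). lra.
    + rewrite d_sym. exact Hbk.
Qed.

Lemma P_ideal : group_ideal mul inv Pinv.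
Proof.
  split; [|split].
  - exact P_fin.
  - exact P_sub.
  - exact P_prod.
Qed.

Lemma St_P A : S_tau mul inv tau A -> Pinv A.
Proof.
  intro H. apply H. exact P_ideal. exact P_gen.
Qed.

Lemma St_fin A : finite_subset A -> S_tau mul inv tau A.
Proof. intros HA I [H1 _] _. auto. Qed.
Lemma St_sub A B : S_tau mul inv tau A -> (forall x, B x -> A x) -> S_tau mul inv tau B.
Proof. intros HA HB I HI Hg. destruct HI as [H1 [H2 H3]]. apply (H2 A); auto. apply HA; auto. split; auto. Qed.
Lemma St_prod A B : S_tau mul inv tau A -> S_tau mul inv tau B ->
  S_tau mul inv tau (prod_inv mul inv A B).
Proof. intros HA HB I HI Hg. destruct HI as [H1 [H2 H3]]. apply H3; [apply HA|apply HB]; auto; split; auto. Qed.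
Lemma St_gen xs x : converges tau xs x -> S_tau mul inv tau (seq_with_limit xs x).
Proof. intros H I _ Hg. auto. Qed.

Lemma Lcover (c : nat -> G) (T : G -> Prop) (t0 : G) :
  CC c -> T t0 ->
  (forall p, T p -> forall eps, 0 < eps -> exists q, T q /\ q <> p /\ d p q < eps) ->
  (forall t, T t -> exists n, c n = t) -> False.
Proof.
  intros HC Tt0 Hdense Hcov.
  assert (Hstep : forall s : G * R * nat, exists s' : G * R,
    let '(p, r, j) := s in (T p /\ 0 < r ->
      T (fst s') /\ 0 < snd s' /\ d p (fst s') + snd s' <= r /\ snd s' < d (c j) (fst s'))).
  { intros [[p r] j].
    destruct (classic (T p /\ 0 < r)) as [[Tp Hr]|Hn]; [| exists (p, r); tauto].
    destruct (Hdense p Tp (r / 2) ltac:(lra)) as [q [Tq [Hqp Hdq]]].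
    assert (Hdpq : 0 < d p q).
    { pose proof (d_pos p q). destruct (Rle_lt_or_eq_dec _ _ H); auto.
      exfalso. apply Hqp. symmetry. apply d_zero. auto. }
    destruct (classic (c j = p)) as [Hcj|Hcj].
    - exists (q, Rmin (r/2) (d p q / 2)). simpl. intros _. rewrite Hcj.
      pose proof (Rmin_l (r/2) (d p q / 2)). pose proof (Rmin_r (r/2) (d p q / 2)).
      assert (0 < Rmin (r/2) (d p q / 2)) by (apply Rmin_glb_lt; lra).
      repeat split; auto; lra.
    - assert (Hd : 0 < d (c j) p).
      { pose proof (d_pos (c j) p). destruct (Rle_lt_or_eq_dec _ _ H); auto.
        exfalso. apply Hcj. apply d_zero. auto. }
      exists (p, Rmin (r/2) (d (c j) p / 2)). simpl. intros _. rewrite d_refl.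
      pose proof (Rmin_l (r/2) (d (c j) p / 2)). pose proof (Rmin_r (r/2) (d (c j) p / 2)).
      assert (0 < Rmin (r/2) (d (c j) p / 2)) by (apply Rmin_glb_lt; lra).
      repeat split; auto; lra. }
  destruct (choice _ Hstep) as [f Hf].
  set (pr := fun k => nat_rect (fun _ => (G * R)%type) (t0, 1)
                (fun k x => f (fst x, snd x, k)) k).
  assert (HprS : forall k, pr (S k) = f (fst (pr k), snd (pr k), k)) by reflexivity.
  assert (Hk : forall k, T (fst (pr k)) /\ 0 < snd (pr k)).
  { intro k. induction k as [|k IH].
    - simpl. split; [exact Tt0 | lra].
    - rewrite HprS. pose proof (Hf (fst (pr k), snd (pr k), k)). simpl in H.
      destruct (H IH) as [A1 [A2 _]]. split; auto. }
  assert (Hinv : forall k, T (fst (pr k)) /\ 0 < snd (pr k) /\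
     d (fst (pr k)) (fst (pr (S k))) + snd (pr (S k)) <= snd (pr k) /\
     snd (pr (S k)) < d (c k) (fst (pr (S k)))).
  { intro k. pose proof (Hf (fst (pr k), snd (pr k), k)). simpl in H.
    destruct (H (Hk k)) as [A1 [A2 [A3 A4]]]. rewrite HprS.
    split; [apply Hk|]. split; [apply Hk|]. split; auto. }
  assert (Hnest : forall k m, d (fst (pr k)) (fst (pr (k + m)%nat)) + snd (pr (k + m)%nat) <= snd (pr k)).
  { intros k m. induction m as [|m IH].
    - rewrite Nat.add_0_r, d_refl. lra.
    - replace (k + S m)%nat with (S (k + m)) by lia.
      destruct (Hinv (k + m)%nat) as [_ [_ [H3 _]]].
      pose proof (d_tri (fst (pr k)) (fst (pr (k + m)%nat)) (fst (pr (S (k + m))))). lra. }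
  destruct (HC (fun k => fst (pr k))) as [j Hj].
  { intro k. apply Hcov. apply Hinv. }
  destruct (Hinv j) as [_ [_ [_ Hsep]]].
  destruct (Hinv (S j)) as [_ [Hpos _]].
  destruct (Hj (d (c j) (fst (pr (S j))) - snd (pr (S j))) ltac:(lra) (S j)) as [k [Hkk Hdk]].
  specialize (Hnest (S j) (k - S j)%nat). replace (S j + (k - S j))%nat with k in Hnest by lia.
  destruct (Hinv k) as [_ [Hposk _]].
  pose proof (d_tri (c j) (fst (pr k)) (fst (pr (S j)))).
  rewrite (d_sym (c j) (fst (pr k))), (d_sym (fst (pr k)) (fst (pr (S j)))) in H. lra.
Qed.

Lemma ND_e : forall eps, 0 < eps -> exists y, y <> e /\ d e y < eps.
Proof.
  destruct ND0 as [x Hx]. intros eps He.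
  destruct (cont_l (inv x) x eps He) as [del [Hdel Hd]].
  destruct (Hx del Hdel) as [y [Hyx Hdy]].
  exists (mul (inv x) y). split.
  - intro H. apply Hyx. apply (cancel_l (inv x)). rewrite H, invl. reflexivity.
  - rewrite <- (invl x). apply Hd. exact Hdy.
Qed.

Fixpoint Spow (X : G -> Prop) (k : nat) : G -> Prop :=
  match k with
  | 0%nat => fun z => z = e
  | S k => fun z => exists s w, Spow X k s /\ X w /\ z = mul s w
  end.

Lemma Spow_St X k : S_tau mul inv tau X -> S_tau mul inv tau (Spow X k).
Proof.
  intro HX. induction k as [|k IH].
  - apply St_fin. exists (e :: nil). intros x Hx. simpl in Hx. left. auto.
  - set (Xi := prod_inv mul inv (fun z => z = e) X).
    assert (HXi : S_tau mul inv tau Xi).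
    { apply St_prod; auto. apply St_fin. exists (e :: nil). intros x Hx. left. auto. }
    apply (St_sub (prod_inv mul inv (Spow X k) Xi)). apply St_prod; auto.
    intros z [s [w [Hs [Hw ->]]]]. exists s, (inv w). split; auto. split.
    + exists e, w. auto.
    + rewrite inv_inv. reflexivity.
Qed.

Lemma Main_theorem :
  ~ has_linearly_ordered_base (coarse_structure mul (S_tau mul inv tau)) /\
  ~ coarse_metrizable (coarse_structure mul (S_tau mul inv tau)).
Proof.
  destruct (choice (fun n y => y <> e /\ d e y < / INR (S n))) as [xs Hxs].
  { intro n. apply ND_e. apply Rinv_0_lt_compat. apply lt_0_INR. lia. }
  set (X := seq_with_limit xs e).
  assert (HX : S_tau mul inv tau X).
  { apply St_gen. apply conv_of_metric. intro n. apply Hxs. }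
  set (T := fun z => exists k, Spow X k z).
  assert (no_cover : forall r c, 0 < r -> CC c ->
     exists z, T z /\ d e z < r /\ forall n, c n <> z).
  { intros r c Hr HC. apply NNPP. intro Hno.
    apply (Lcover c (fun z => T z /\ d e z < r) e HC).
    - split. exists 0%nat. reflexivity. rewrite d_refl. exact Hr.
    - intros p [[k Hp] Hdp] eps Heps.
      set (eps' := Rmin eps (r - d e p)).
      assert (He' : 0 < eps') by (apply Rmin_glb_lt; lra).
      destruct (cont_l p e eps' He') as [del [Hdel Hd]].
      destruct (arch del Hdel) as [K HK].
      exists (mul p (xs K)). destruct (Hxs K) as [HxK HdK].
      assert (Hpq : d p (mul p (xs K)) < eps').
      { rewrite <- (idr p) at 1. apply Hd. lra. }
      assert (M1 : eps' <= eps) by apply Rmin_l.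
      assert (M2 : eps' <= r - d e p) by apply Rmin_r.
      split; [split|split].
      + exists (S k). exists p, (xs K). split; auto. split; auto. right. exists K. auto.
      + pose proof (d_tri e p (mul p (xs K))). lra.
      + intro Heq. apply HxK. apply (cancel_l p). rewrite Heq, idr. reflexivity.
      + lra.
    - intros t Ht. apply NNPP. intro Hn. apply Hno. exists t. split. apply Ht. split. apply Ht.
      intros n Hcn. apply Hn. exists n. exact Hcn. }
  assert (Zlem : forall (c : nat -> nat -> G), (forall n, CC (c n)) ->
     exists z : nat -> G, S_tau mul inv tau (seq_with_limit z e) /\
       forall n m, c n m <> z n).
  { intros c Hc.
    destruct (choice (fun n z => T z /\ d e z < / INR (S n) /\ forall m, c n m <> z)) as [z Hz].
    { intro n. apply no_cover. apply Rinv_0_lt_compat. apply lt_0_INR. lia. apply Hc. }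
    exists z. split.
    - apply St_gen. apply conv_of_metric. intro n. apply Hz.
    - intros n m. apply Hz. }
  assert (entZ : forall Z x, Z x -> entourage_of mul Z x e).
  { intros Z x Hx. exists x. split; [exact Hx|]. rewrite idr. reflexivity. }
  split.
  - intros [B [[Hb1 Hb2] Hlin]].
    assert (Hj : forall j, exists p : (G -> G -> Prop) * (nat -> G),
       B (fst p) /\ rel_sub (entourage_of mul (Spow X j)) (fst p) /\ CC (snd p) /\
       forall x y, fst p x y -> exists n, x = mul (snd p n) y).
    { intro j. destruct (Hb2 (entourage_of mul (Spow X j))) as [E [BE HE]].
      { exists (Spow X j). split. apply Spow_St; auto. auto. }
      destruct (Hb1 E BE) as [A [HA HEA]].
      destruct (St_P A HA) as [c [Hc HCc]].
      exists (E, c). simpl. split; auto. split; auto. split; auto.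
      intros x y Hxy. destruct (HEA x y Hxy) as [a [Ha ->]].
      destruct (Hc a Ha) as [n <-]. exists n. reflexivity. }
    destruct (choice _ Hj) as [P HP].
    destruct (Zlem (fun n => snd (P n)) (fun n => proj1 (proj2 (proj2 (HP n))))) as [z [HZ Hz]].
    destruct (Hb2 (entourage_of mul (seq_with_limit z e))) as [E' [BE' HE']].
    { exists (seq_with_limit z e). split; auto. }
    assert (Hsub : forall j, rel_sub (fst (P j)) E').
    { intro j. destruct (HP j) as [BEj [_ [_ HEj]]].
      destruct (Hlin _ _ BEj BE') as [H|H]; auto. exfalso.
      assert (Hzj : fst (P j) (z j) e).
      { apply H. apply HE'. apply entZ. right. exists j. reflexivity. }
      destruct (HEj _ _ Hzj) as [n Hn]. rewrite idr in Hn. apply (Hz j n). auto. }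
    destruct (Hb1 E' BE') as [A' [HA' HEA']].
    destruct (St_P A' HA') as [c' [Hc' HCc']].
    destruct (no_cover 1 c' Rlt_0_1 HCc') as [t [[k Hk] [_ Ht]]].
    destruct (HP k) as [_ [HSk _]].
    assert (H1 : E' t e). { apply (Hsub k). apply HSk. apply entZ. exact Hk. }
    destruct (HEA' _ _ H1) as [a [Ha Hta]]. rewrite idr in Hta. subst a.
    destruct (Hc' t Ha) as [n Hn]. apply (Ht n Hn).
  - intros [f [Hb1 Hb2]].
    assert (Hj : forall n, exists c : nat -> G, CC c /\
       forall x y, f n x y -> exists m, x = mul (c m) y).
    { intro n. destruct (Hb1 (f n) (ex_intro _ n eq_refl)) as [A [HA HEA]].
      destruct (St_P A HA) as [c [Hc HCc]]. exists c. split; auto.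
      intros x y Hxy. destruct (HEA x y Hxy) as [a [Ha ->]].
      destruct (Hc a Ha) as [m <-]. exists m. reflexivity. }
    destruct (choice _ Hj) as [C HC].
    destruct (Zlem C (fun n => proj1 (HC n))) as [z [HZ Hz]].
    destruct (Hb2 (entourage_of mul (seq_with_limit z e))) as [E' [[n ->] HE']].
    { exists (seq_with_limit z e). split; auto. }
    assert (H1 : f n (z n) e). { apply HE'. apply entZ. right. exists n. reflexivity. }
    destruct (proj2 (HC n) _ _ H1) as [m Hm]. rewrite idr in Hm. apply (Hz n m). auto.
Qed.

End Main.

Theorem theorem8 (G : Type) (mul : G -> G -> G) (inv : G -> G) (e : G)
  (tau : (G -> Prop) -> Prop)
  (Htg : is_topological_group mul inv e tau)
  (Hmet : metrizable_topology tau)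
  (Hnd : ~ discrete_topology tau) :
  ~ has_linearly_ordered_base (coarse_structure mul (S_tau mul inv tau)) /\
  ~ coarse_metrizable (coarse_structure mul (S_tau mul inv tau)).
Proof.
  destruct Htg as [[assoc [idl [idr [invl invr]]]] [Htop [mulc invc]]].
  destruct Hmet as [d [[dpos [dzero [dsym dtri]]] Htau]].
  assert (ND0 : exists x, forall eps, 0 < eps -> exists y, y <> x /\ d x y < eps).
  { apply NNPP. intro Hno. apply Hnd. intro U. apply Htau. intros x Ux.
    apply NNPP. intro Hx. apply Hno. exists x. intros eps Heps.
    apply NNPP. intro Hy. apply Hx. exists eps. split; auto. intros y Hdy.
    apply NNPP. intro HUy. apply Hy. exists y. split; auto. intro; subst; auto. }
  exact (Main_theorem G mul inv e tau d assoc idl idr invl mulc invc dpos dzero dsym dtri Htau ND0).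
Qed.
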